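(* Let $0<a$ and let $\mathbf v_c=(v_{c1},v_{c2},v_{c3},v_{c4})$ satisfy $a\le v_{c1}\le v_{c2}\le v_{c3}\le v_{c4}<\infty$. Let $\mathbf p_c=(p_{c1},p_{c2},p_{c3},p_{c4})$ be the unique maximizer of $L_{\mathbf v_c}$ over the simplex $\Delta$. For $\mathbf v_t\in[a,\infty)^4$ put $$R(\mathbf v_t,\mathbf v_c)=1-\left(\frac{L_{\mathbf v_t}(\mathbf p_c)}{\max_{\mathbf p\in\Delta}L_{\mathbf v_t}(\mathbf p)}\right)^{1/3},$$ and $R_{\max}(c)=\sup_{\mathbf v_t\in[a,\infty)^4}R(\mathbf v_t,\mathbf v_c)$. (i) If $v_{c4}\ge v_{c1}+v_{c2}+v_{c3}$, then $R_{\max}(c)=1$. (ii) If $v_{c4}<v_{c1}+v_{c2}+v_{c3}$, then $R_{\max}(c)=1-3\,(p_{c2}p_{c3}p_{c4})^{1/3}$.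
   Context: Setting: a $2^2$ experiment with binary response under a generalized linear model with main-effects linear predictor $\eta=\beta_0+\beta_1x_1+\beta_2x_2$. A design is a vector $\mathbf p=(p_1,p_2,p_3,p_4)$ in the simplex $\Delta=\{p_i\ge0,\ \sum_i p_i=1\}$. With $w_i>0$ the GLM weights at the four design points and $v_i=1/w_i$, the $D$-criterion equals $16w_1w_2w_3w_4L_{\mathbf v}(\mathbf p)$ where $$L_{\mathbf v}(\mathbf p)=v_4p_1p_2p_3+v_3p_1p_2p_4+v_2p_1p_3p_4+v_1p_2p_3p_4 .$$ For every $\mathbf v$ with positive entries, $L_{\mathbf v}$ has a unique maximizer on $\Delta$. $\mathbf v_c$ is the assumed value, $\mathbf v_t$ the true value, and $R$ the relative loss of efficiency. *)

(* Defs.v *)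
From Stdlib Require Import Reals Lra.
Open Scope R_scope.

(* A vector of R^4, used both for designs p and for v = (1/w_i). *)
Record vec4 := mk4 { x1 : R; x2 : R; x3 : R; x4 : R }.

Definition in_simplex (p : vec4) : Prop :=
  0 <= x1 p /\ 0 <= x2 p /\ 0 <= x3 p /\ 0 <= x4 p /\
  x1 p + x2 p + x3 p + x4 p = 1.

Definition Lv (v p : vec4) : R :=
  x4 v * x1 p * x2 p * x3 p + x3 v * x1 p * x2 p * x4 p
  + x2 v * x1 p * x3 p * x4 p + x1 v * x2 p * x3 p * x4 p.

Definition is_maximizer (v p : vec4) : Prop :=
  in_simplex p /\ forall q, in_simplex q -> Lv v q <= Lv v p.

Definition is_max_value (v : vec4) (M : R) : Prop :=
  (exists p, in_simplex p /\ Lv v p = M) /\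
  (forall q, in_simplex q -> Lv v q <= M).

Definition cbrt (x : R) : R :=
  if Rle_dec x 0 then 0 else Rpower x (/ 3).

(* r = R(v_t, v_c) = 1 - (L_{v_t}(p_c) / max_Delta L_{v_t})^(1/3),
   where p_c is the maximizer of L_{v_c}. *)
Definition loss_value (vt pc : vec4) (r : R) : Prop :=
  exists M, is_max_value vt M /\ r = 1 - cbrt (Lv vt pc / M).

Definition in_box (a : R) (v : vec4) : Prop :=
  a <= x1 v /\ a <= x2 v /\ a <= x3 v /\ a <= x4 v.

(* The set { R(v_t, v_c) | v_t in [a,oo)^4 }; its supremum is R_max(c). *)
Definition loss_set (a : R) (pc : vec4) (r : R) : Prop :=
  exists vt, in_box a vt /\ loss_value vt pc r.

(* Main.v *)
Require Import Defs.
From Stdlib Require Import Reals Lra Psatz.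
Open Scope R_scope.

Lemma cbrt_nonneg x : 0 <= cbrt x.
Proof. unfold cbrt. destruct (Rle_dec x 0); [lra|]. unfold Rpower. left; apply exp_pos. Qed.

Lemma cbrt_pos x : 0 < x -> 0 < cbrt x.
Proof. intro. unfold cbrt. destruct (Rle_dec x 0); [lra|]. unfold Rpower. apply exp_pos. Qed.

Lemma cbrt_mono x y : 0 <= x -> x <= y -> cbrt x <= cbrt y.
Proof.
  intros Hx Hxy. unfold cbrt. destruct (Rle_dec x 0); destruct (Rle_dec y 0); try lra.
  - unfold Rpower; left; apply exp_pos.
  - apply Rle_Rpower_l; lra.
Qed.

Lemma cbrt_cube y : 0 <= y -> cbrt (y^3) = y.
Proof.
  intros Hy. destruct (Req_dec y 0) as [->|Hn].
  - unfold cbrt. destruct (Rle_dec (0^3) 0); [reflexivity|]. exfalso; apply n; simpl; lra.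
  - assert (Hp : 0 < y) by lra.
    unfold cbrt. destruct (Rle_dec (y^3) 0) as [h|h].
    + exfalso. assert (0 < y^3) by (apply pow_lt; lra). lra.
    + rewrite <- Rpower_pow by lra. rewrite Rpower_mult.
      replace (INR 3 * / 3) with 1 by (simpl; field). apply Rpower_1; lra.
Qed.

Lemma cube_cbrt x : 0 <= x -> (cbrt x)^3 = x.
Proof.
  intros Hx. destruct (Req_dec x 0) as [->|Hn].
  - unfold cbrt. destruct (Rle_dec 0 0); [simpl; ring|lra].
  - unfold cbrt. destruct (Rle_dec x 0) as [h|h]; [lra|].
    rewrite <- Rpower_pow by (unfold Rpower; apply exp_pos).
    rewrite Rpower_mult. replace (/3 * INR 3) with 1 by (simpl; field). apply Rpower_1; lra.
Qed.

Lemma cbrt_mul27 c : 0 <= c -> cbrt (27 * c) = 3 * cbrt c.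
Proof.
  intros Hc.
  assert (H1 : 0 <= 3 * cbrt c) by (pose proof (cbrt_nonneg c); lra).
  rewrite <- (cbrt_cube (3 * cbrt c)) by lra.
  f_equal. rewrite Rpow_mult_distr, cube_cbrt by lra. ring.
Qed.

Lemma amgm3 x y z : 0 <= x -> 0 <= y -> 0 <= z -> x + y + z = 1 -> x*y*z <= 1/27.
Proof.
  intros H0 H1 H2 HS. assert (H3 : x*y <= ((1-z)/2)^2) by (replace (1-z) with (x+y) by lra; pose proof (pow2_ge_0 (x-y)); nra).
  assert (H4 : x*y*z <= ((1-z)/2)^2 * z) by (apply Rmult_le_compat_r; lra).
  assert (H5 : 1/27 - ((1-z)/2)^2*z = (3*z-1)^2*(4-3*z)/108) by field.
  assert (0 <= (3*z-1)^2*(4-3*z)) by (apply Rmult_le_pos; [apply pow2_ge_0|lra]).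
  lra.
Qed.

Lemma amgm3_eq x y z : 0 <= x -> 0 <= y -> 0 <= z -> x + y + z = 1 -> x*y*z = 1/27 -> z = 1/3.
Proof.
  intros H0 H1 H2 HS HE. assert (H3 : x*y <= ((1-z)/2)^2) by (replace (1-z) with (x+y) by lra; pose proof (pow2_ge_0 (x-y)); nra).
  assert (H4 : x*y*z <= ((1-z)/2)^2 * z) by (apply Rmult_le_compat_r; lra).
  assert (H5 : 1/27 - ((1-z)/2)^2*z = (3*z-1)^2*(4-3*z)/108) by field.
  assert (H6 : (3*z-1)^2*(4-3*z) <= 0) by lra.
  assert (H7 : (3*z-1)^2 <= 0).
  { destruct (Rle_lt_dec ((3*z-1)^2) 0); auto.
    assert (0 < (3*z-1)^2*(4-3*z)) by (apply Rmult_lt_0_compat; lra). lra. }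
  assert (H8 : (3*z-1)^2 = 0) by (pose proof (pow2_ge_0 (3*z-1)); lra).
  assert (3*z-1 = 0) by nra; lra.
Qed.

Lemma amgm3_le x y z : 0 <= x -> 0 <= y -> 0 <= z -> x + y + z <= 1 -> x*y*z <= 1/27.
Proof.
  intros. assert (x*y*z <= x*y*(1-x-y)).
  { apply Rmult_le_compat_l; [nra|lra]. }
  pose proof (amgm3 x y (1-x-y)). lra.
Qed.

Lemma L_le_sum v q : 0 <= x1 v -> 0 <= x2 v -> 0 <= x3 v -> 0 <= x4 v -> in_simplex q ->
  Lv v q <= (x1 v + x2 v + x3 v + x4 v)/27.
Proof.
  destruct v as [v1 v2 v3 v4], q as [p1 p2 p3 p4]; unfold in_simplex, Lv; simpl.
  intros h1 h2 h3 h4 [q1 [q2 [q3 [q4 qs]]]].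
  assert (c1 : p2*p3*p4 <= 1/27) by (apply amgm3_le; lra).
  assert (c2 : p1*p3*p4 <= 1/27) by (apply amgm3_le; lra).
  assert (c3 : p1*p2*p4 <= 1/27) by (apply amgm3_le; lra).
  assert (c4 : p1*p2*p3 <= 1/27) by (apply amgm3_le; lra).
  assert (v1 * (p2*p3*p4) <= v1 * (1/27)) by (apply Rmult_le_compat_l; lra).
  assert (v2 * (p1*p3*p4) <= v2 * (1/27)) by (apply Rmult_le_compat_l; lra).
  assert (v3 * (p1*p2*p4) <= v3 * (1/27)) by (apply Rmult_le_compat_l; lra).
  assert (v4 * (p1*p2*p3) <= v4 * (1/27)) by (apply Rmult_le_compat_l; lra).
  lra.
Qed.

Lemma maxA1 v q : 0 <= x2 v -> 0 <= x3 v -> 0 <= x4 v -> x2 v + x3 v + x4 v <= x1 v ->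
  in_simplex q -> Lv v q <= x1 v / 27.
Proof.
  destruct v as [v1 v2 v3 v4], q as [p1 p2 p3 p4]; unfold in_simplex, Lv; simpl.
  intros h2 h3 h4 hs [q1 [q2 [q3 [q4 qs]]]].
  assert (c1 : p2*p3*p4 <= 1/27) by (apply amgm3_le; lra).
  assert (c12 : p3*p4*(p1+p2) <= 1/27) by (apply amgm3; lra).
  assert (c13 : p2*p4*(p1+p3) <= 1/27) by (apply amgm3; lra).
  assert (c14 : p2*p3*(p1+p4) <= 1/27) by (apply amgm3; lra).
  assert ((v1-v2-v3-v4) * (p2*p3*p4) <= (v1-v2-v3-v4) * (1/27)) by (apply Rmult_le_compat_l; lra).
  assert (v2 * (p3*p4*(p1+p2)) <= v2 * (1/27)) by (apply Rmult_le_compat_l; lra).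
  assert (v3 * (p2*p4*(p1+p3)) <= v3 * (1/27)) by (apply Rmult_le_compat_l; lra).
  assert (v4 * (p2*p3*(p1+p4)) <= v4 * (1/27)) by (apply Rmult_le_compat_l; lra).
  lra.
Qed.

Lemma main_lub a pc : 0 < a -> in_simplex pc ->
  let c1 := x2 pc * x3 pc * x4 pc in
  c1 <= x1 pc * x3 pc * x4 pc -> c1 <= x1 pc * x2 pc * x4 pc -> c1 <= x1 pc * x2 pc * x3 pc ->
  is_lub (loss_set a pc) (1 - 3 * cbrt c1).
Proof.
  intros Ha Hs c1 h2 h3 h4.
  pose proof Hs as [q1 [q2 [q3 [q4 qs]]]].
  assert (Hc1 : 0 <= c1) by (unfold c1; repeat apply Rmult_le_pos; lra).
  split.
  - intros r [vt [[b1 [b2 [b3 b4]]] [M [[[p [Hp HpM]] HM] Hr]]]].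
    rewrite Hr.
    pose proof (HM (mk4 (1/4) (1/4) (1/4) (1/4))) as Hq.
    assert (Hin : in_simplex (mk4 (1/4) (1/4) (1/4) (1/4))) by (unfold in_simplex; simpl; lra).
    specialize (Hq Hin). unfold Lv in Hq; simpl in Hq.
    assert (Mpos : 0 < M) by lra.
    pose proof (L_le_sum vt p ltac:(lra) ltac:(lra) ltac:(lra) ltac:(lra) Hp) as HMs.
    rewrite HpM in HMs.
    assert (HL : c1 * (x1 vt + x2 vt + x3 vt + x4 vt) <= Lv vt pc).
    { unfold Lv. unfold c1 in *.
      assert (x2 vt * (x2 pc * x3 pc * x4 pc) <= x2 vt * (x1 pc * x3 pc * x4 pc)) by (apply Rmult_le_compat_l; lra).
      assert (x3 vt * (x2 pc * x3 pc * x4 pc) <= x3 vt * (x1 pc * x2 pc * x4 pc)) by (apply Rmult_le_compat_l; lra).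
      assert (x4 vt * (x2 pc * x3 pc * x4 pc) <= x4 vt * (x1 pc * x2 pc * x3 pc)) by (apply Rmult_le_compat_l; lra).
      lra. }
    assert (H27 : 27 * c1 <= Lv vt pc / M).
    { apply (Rmult_le_reg_r M); [lra|]. replace (Lv vt pc / M * M) with (Lv vt pc) by (field; lra).
      assert (c1 * (27*M) <= c1 * (x1 vt + x2 vt + x3 vt + x4 vt)) by (apply Rmult_le_compat_l; lra).
      lra. }
    pose proof (cbrt_mono (27*c1) _ ltac:(lra) H27). rewrite cbrt_mul27 in H by lra. lra.
  - intros b Hb.
    destruct (Rle_lt_dec (1 - 3 * cbrt c1) b) as [ok|lt]; [exact ok|exfalso].
    set (d := 1 - 3 * cbrt c1 - b).
    set (y := 3 * cbrt c1 + d/2).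
    pose proof (cbrt_nonneg c1) as Hcn.
    assert (Hy : 0 < y) by (unfold y, d; lra).
    set (e := y^3 - 27*c1).
    assert (He : 0 < e).
    { unfold e. rewrite <- (cube_cbrt (27*c1)) by lra. rewrite cbrt_mul27 by lra.
      assert (3 * cbrt c1 < y) by (unfold y, d; lra).
      set (s := 3 * cbrt c1) in *. assert (0 <= s) by (unfold s; lra).
      replace (y^3 - s^3) with ((y-s)*(y*y+y*s+s*s)) by ring.
      apply Rmult_lt_0_compat; nra. }
    set (K := x1 pc * x3 pc * x4 pc + x1 pc * x2 pc * x4 pc + x1 pc * x2 pc * x3 pc).
    assert (HK : 0 <= K) by (unfold K; repeat (apply Rplus_le_le_0_compat || apply Rmult_le_pos); lra).
    set (t := 3*a + 27*a*K/e).
    assert (Ht3 : 3*a <= t) by (unfold t; assert (0 <= 27*a*K/e) by (apply Rmult_le_pos; [nra|left; apply Rinv_0_lt_compat; lra]); lra).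
    assert (Hte : 27*a*K <= e*t) by (unfold t; field_simplify; [nra|lra]).
    set (vt := mk4 t a a a).
    set (ratio := Lv vt pc / (t/27)).
    assert (Hrat : loss_set a pc (1 - cbrt ratio)).
    { exists vt. split; [unfold in_box, vt; simpl; lra|].
      exists (t/27). split; [|reflexivity]. split.
      - exists (mk4 0 (1/3) (1/3) (1/3)). split; [unfold in_simplex; simpl; lra|].
        unfold Lv, vt; simpl; field.
      - intros q Hq. apply maxA1; unfold vt; simpl; [lra|lra|lra|lra|exact Hq]. }
    specialize (Hb _ Hrat).
    assert (Hratio : ratio = 27*c1 + 27*a*K/t).
    { unfold ratio, Lv, vt, K, c1; simpl. field. lra. }
    assert (Hr1 : ratio <= y^3).
    { rewrite Hratio. assert (27*a*K/t <= e).
      { apply (Rmult_le_reg_r t); [lra|]. replace (27*a*K/t*t) with (27*a*K) by (field; lra). lra. }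
      unfold e in H. lra. }
    assert (Hr0 : 0 <= ratio).
    { rewrite Hratio. assert (0 <= 27*a*K/t) by (apply Rmult_le_pos; [nra|left; apply Rinv_0_lt_compat; lra]). lra. }
    pose proof (cbrt_mono _ _ Hr0 Hr1). rewrite cbrt_cube in H by lra.
    unfold y, d in H. lra.
Qed.

Lemma better v : 0 < x4 v -> x4 v < x1 v + x2 v + x3 v ->
  exists q, in_simplex q /\ x4 v / 27 < Lv v q.
Proof.
  destruct v as [v1 v2 v3 v4]; simpl. intros h4 hs.
  set (D := v1 + v2 + v3 - v4).
  assert (HD : 0 < D) by (unfold D; lra).
  set (e := D / (2*D + 8*v4)).
  assert (He0 : 0 < e) by (unfold e; apply Rdiv_lt_0_compat; lra).
  assert (He1 : e <= 1/2) by (unfold e; apply Rmult_le_reg_r with (2*D+8*v4); [lra|];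
     field_simplify; lra).
  assert (He2 : 8 * v4 * e <= D) by (unfold e; apply Rmult_le_reg_r with (2*D+8*v4); [lra|];
     field_simplify; nra).
  exists (mk4 ((1-e)/3) ((1-e)/3) ((1-e)/3) e). split.
  - unfold in_simplex; simpl; lra.
  - unfold Lv; simpl.
    assert (Hid : 27 * (v4 * ((1 - e) / 3) * ((1 - e) / 3) * ((1 - e) / 3) +
      v3 * ((1 - e) / 3) * ((1 - e) / 3) * e + v2 * ((1 - e) / 3) * ((1 - e) / 3) * e +
      v1 * ((1 - e) / 3) * ((1 - e) / 3) * e) - v4
      = e * (3*D*(1-e)^2 - v4 * e * (3 - 2*e))) by (unfold D; field).
    assert (Ha : 3*D/4 <= 3*D*(1-e)^2).
    { assert (1/4 <= (1-e)^2) by nra. nra. }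
    assert (Hb : v4 * e * (3 - 2*e) <= 3 * D / 8) by nra.
    assert (0 < e * (3*D*(1-e)^2 - v4 * e * (3 - 2*e))) by (apply Rmult_lt_0_compat; lra).
    lra.
Qed.

Theorem corollary3 (a : R) (vc pc : vec4) :
  0 < a ->
  a <= x1 vc -> x1 vc <= x2 vc -> x2 vc <= x3 vc -> x3 vc <= x4 vc ->
  is_maximizer vc pc ->
  (x1 vc + x2 vc + x3 vc <= x4 vc -> is_lub (loss_set a pc) 1) /\
  (x4 vc < x1 vc + x2 vc + x3 vc ->
     is_lub (loss_set a pc) (1 - 3 * cbrt (x2 pc * x3 pc * x4 pc))).
Proof.
  intros Ha h1 h12 h23 h34 [Hs Hmax].
  pose proof Hs as Hs'.
  destruct vc as [v1 v2 v3 v4], pc as [p1 p2 p3 p4].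
  unfold in_simplex in Hs'; simpl in *. destruct Hs' as [q1 [q2 [q3 [q4 qs]]]].
  split.
  - intros Hcase.
    pose proof (Hmax (mk4 (1/3) (1/3) (1/3) 0) ltac:(unfold in_simplex; simpl; lra)) as Hb.
    unfold Lv in Hb; simpl in Hb.
    assert (c4 : p1*p2*p3 <= 1/27) by (apply amgm3_le; lra).
    assert (c41 : p3*(p1+p4)*p2 <= 1/27) by (apply amgm3; lra).
    assert (c42 : p3*(p2+p4)*p1 <= 1/27) by (apply amgm3; lra).
    assert (c43 : p2*(p1+p4)*p3 <= 1/27) by (apply amgm3; lra).
    assert (c44 : p1*(p2+p4)*p3 <= 1/27) by (apply amgm3; lra).
    assert (c45 : p1*(p3+p4)*p2 <= 1/27) by (apply amgm3; lra).
    assert (d0 : (v4-v1-v2-v3) * (p1*p2*p3) <= (v4-v1-v2-v3) * (1/27)) by (apply Rmult_le_compat_l; lra).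
    assert (d1 : v1 * (p3*(p1+p4)*p2) <= v1 * (1/27)) by (apply Rmult_le_compat_l; lra).
    assert (d2 : v2 * (p3*(p2+p4)*p1) <= v2 * (1/27)) by (apply Rmult_le_compat_l; lra).
    assert (d3 : v3 * (p1*(p3+p4)*p2) <= v3 * (1/27)) by (apply Rmult_le_compat_l; lra).
    assert (e1 : v1 * (p3*(p1+p4)*p2) = v1 * (1/27)) by lra.
    assert (e2 : v2 * (p3*(p2+p4)*p1) = v2 * (1/27)) by lra.
    apply Rmult_eq_reg_l in e1; [|lra]. apply Rmult_eq_reg_l in e2; [|lra].
    assert (P2 : p2 = 1/3) by (apply (amgm3_eq p3 (p1+p4) p2); lra).
    assert (P1 : p1 = 1/3) by (apply (amgm3_eq p3 (p2+p4) p1); lra).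
    assert (e3 : p2*(p1+p4)*p3 = 1/27) by (rewrite <- e1; ring).
    assert (P3 : p3 = 1/3) by (apply (amgm3_eq p2 (p1+p4) p3); lra).
    assert (P4 : p4 = 0) by lra.
    pose proof (main_lub a (mk4 p1 p2 p3 p4) Ha Hs) as HL. simpl in HL.
    assert (E : 1 - 3 * cbrt (p2*p3*p4) = 1).
    { rewrite P4, Rmult_0_r. unfold cbrt. destruct (Rle_dec 0 0); [ring|lra]. }
    rewrite E in HL. apply HL; rewrite P4; try nra.
  - intros Hcase.
    destruct (better (mk4 v1 v2 v3 v4)) as [q [Hq Hlt]]; simpl; try lra.
    pose proof (Hmax q Hq) as Hm.
    assert (pos : forall i, (i = p1 \/ i = p2 \/ i = p3 \/ i = p4) -> 0 < i).
    { intros i Hi. destruct (Req_dec i 0) as [Hz|Hz]; [exfalso|lra].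
      assert (Lv (mk4 v1 v2 v3 v4) (mk4 p1 p2 p3 p4) <= v4 / 27).
      { unfold Lv; simpl.
        destruct Hi as [ -> | [ -> | [ -> | -> ] ] ]; rewrite Hz.
        - assert (p2*p3*p4 <= 1/27) by (apply amgm3; lra).
          assert (v1 * (p2*p3*p4) <= v1 * (1/27)) by (apply Rmult_le_compat_l; lra). lra.
        - assert (p1*p3*p4 <= 1/27) by (apply amgm3; lra).
          assert (v2 * (p1*p3*p4) <= v2 * (1/27)) by (apply Rmult_le_compat_l; lra). lra.
        - assert (p1*p2*p4 <= 1/27) by (apply amgm3; lra).
          assert (v3 * (p1*p2*p4) <= v3 * (1/27)) by (apply Rmult_le_compat_l; lra). lra.
        - assert (p1*p2*p3 <= 1/27) by (apply amgm3; lra).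
          assert (v4 * (p1*p2*p3) <= v4 * (1/27)) by (apply Rmult_le_compat_l; lra). lra. }
      simpl in *. lra. }
    assert (P1 := pos p1 ltac:(tauto)). assert (P2 := pos p2 ltac:(tauto)).
    assert (P3 := pos p3 ltac:(tauto)). assert (P4 := pos p4 ltac:(tauto)).
    assert (S2 : p2 <= p1).
    { destruct (Rle_lt_dec p2 p1) as [ok|lt]; [exact ok|exfalso].
      set (m := (p1+p2)/2).
      pose proof (Hmax (mk4 m m p3 p4) ltac:(unfold in_simplex, m; simpl; lra)) as H.
      unfold Lv in H; simpl in H.
      assert (Hid : v4 * m * m * p3 + v3 * m * m * p4 + v2 * m * p3 * p4 + v1 * m * p3 * p4
        - (v4 * p1 * p2 * p3 + v3 * p1 * p2 * p4 + v2 * p1 * p3 * p4 + v1 * p2 * p3 * p4)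
        = ((p2-p1)/2)^2 * (v4*p3 + v3*p4) + p3*p4*((p2-p1)/2)*(v2-v1)) by (unfold m; field).
      assert (0 < ((p2-p1)/2)^2 * (v4*p3 + v3*p4)) by (apply Rmult_lt_0_compat; [apply pow_lt; lra|nra]).
      assert (0 <= p3*p4*((p2-p1)/2)*(v2-v1)) by (repeat apply Rmult_le_pos; lra).
      lra. }
    assert (S3 : p3 <= p1).
    { destruct (Rle_lt_dec p3 p1) as [ok|lt]; [exact ok|exfalso].
      set (m := (p1+p3)/2).
      pose proof (Hmax (mk4 m p2 m p4) ltac:(unfold in_simplex, m; simpl; lra)) as H.
      unfold Lv in H; simpl in H.
      assert (Hid : v4 * m * p2 * m + v3 * m * p2 * p4 + v2 * m * m * p4 + v1 * p2 * m * p4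
        - (v4 * p1 * p2 * p3 + v3 * p1 * p2 * p4 + v2 * p1 * p3 * p4 + v1 * p2 * p3 * p4)
        = ((p3-p1)/2)^2 * (v4*p2 + v2*p4) + p2*p4*((p3-p1)/2)*(v3-v1)) by (unfold m; field).
      assert (0 < ((p3-p1)/2)^2 * (v4*p2 + v2*p4)) by (apply Rmult_lt_0_compat; [apply pow_lt; lra|nra]).
      assert (0 <= p2*p4*((p3-p1)/2)*(v3-v1)) by (repeat apply Rmult_le_pos; lra).
      lra. }
    assert (S4 : p4 <= p1).
    { destruct (Rle_lt_dec p4 p1) as [ok|lt]; [exact ok|exfalso].
      set (m := (p1+p4)/2).
      pose proof (Hmax (mk4 m p2 p3 m) ltac:(unfold in_simplex, m; simpl; lra)) as H.
      unfold Lv in H; simpl in H.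
      assert (Hid : v4 * m * p2 * p3 + v3 * m * p2 * m + v2 * m * p3 * m + v1 * p2 * p3 * m
        - (v4 * p1 * p2 * p3 + v3 * p1 * p2 * p4 + v2 * p1 * p3 * p4 + v1 * p2 * p3 * p4)
        = ((p4-p1)/2)^2 * (v3*p2 + v2*p3) + p2*p3*((p4-p1)/2)*(v4-v1)) by (unfold m; field).
      assert (0 < ((p4-p1)/2)^2 * (v3*p2 + v2*p3)) by (apply Rmult_lt_0_compat; [apply pow_lt; lra|nra]).
      assert (0 <= p2*p3*((p4-p1)/2)*(v4-v1)) by (repeat apply Rmult_le_pos; lra).
      lra. }
    apply (main_lub a (mk4 p1 p2 p3 p4) Ha Hs); simpl.
    + assert (0 <= p3*p4) by nra. nra.
    + assert (0 <= p2*p4) by nra. nra.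
    + assert (0 <= p2*p3) by nra. nra.
Qed.
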